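(* For every integer $n\ge 1$, \[ \sum_{k=1}^{n}(-1)^{k-1}\genfrac{\{}{\}}{0pt}{}{n}{k}(k-1)!\,H_{k}=B_{n-1}. \] For integers $n>1$, $m\ge 1$ with $n+m$ odd (and $n+m\ge 3$), \[ (-1)^{n-1}\frac{n-1}{2}B_{n+m-1}=\sum_{j=1}^{n}\sum_{k=1}^{m}(-1)^{k+j}\genfrac{\{}{\}}{0pt}{}{n}{j}\genfrac{\{}{\}}{0pt}{}{m}{k}\frac{j!\,k!\,H_{j}}{(k+j)(k+j+1)}. \]
   Context: $\genfrac{\{}{\}}{0pt}{}{n}{k}$ denotes the Stirling numbers of the second kind, $H_k=\sum_{i=1}^k 1/i$ the harmonic numbers, and $B_n$ the Bernoulli numbers, $\sum_{n\ge0}B_n t^n/n!=t/(e^t-1)$ (so $B_1=-1/2$). *)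

(* Defs.v *)
From mathcomp Require Import all_boot all_order all_algebra.
Set Implicit Arguments. Unset Strict Implicit. Unset Printing Implicit Defensive.
Import Order.TTheory GRing.Theory Num.Theory.
Local Open Scope ring_scope.

Fixpoint stirling2 (n k : nat) : nat :=
  match n, k with
  | 0, 0 => 1
  | 0, _.+1 => 0
  | _.+1, 0 => 0
  | n'.+1, k'.+1 => (k'.+1 * stirling2 n' k'.+1 + stirling2 n' k')%N
  end.

Definition harmonic (k : nat) : rat := \sum_(1 <= i < k.+1) (i%:R)^-1.

(* Bernoulli numbers with t/(e^t-1) = sum B_n t^n/n! (so B_1 = -1/2).
   Comparing coefficients of t^{n+1} in (e^t - 1) * sum B_k t^k/k! = t gives
   B_0 = 1 and sum_{k<=n} C(n+1,k) B_k = 0 for n >= 1, i.e.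
   B_n = -(1/(n+1)) sum_{k<n} C(n+1,k) B_k.  bern_seq n = [B_0; ...; B_n]. *)
Fixpoint bern_seq (n : nat) : seq rat :=
  match n with
  | 0 => [:: 1]
  | n'.+1 =>
      let s := bern_seq n' in
      rcons s (- (\sum_(k < n'.+1) ('C(n'.+2, k))%:R * s`_k) / (n'.+2)%:R)
  end.

Definition bernoulli (n : nat) : rat := (bern_seq n)`_n.

(* Main.v *)
Require Import Defs.
From mathcomp Require Import all_boot all_order all_algebra.
From mathcomp Require Import ring.
Import Order.TTheory GRing.Theory Num.Theory.
Local Open Scope ring_scope.

Lemma stirling2_gt (n k : nat) : (n < k)%N -> stirling2 n k = 0%N.
Proof.
elim: n k => [|n IH] [|k] //= H.
by rewrite !IH // ?muln0 // ltnW.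
Qed.

Definition hh : {poly rat} := 'X * (1 - 'X).

Definition prevc (g : {poly rat}) i := if i is j.+1 then g`_j else 0.
Lemma prevcS g i : prevc g i.+1 = g`_i. Proof. by []. Qed.
Lemma prevc0 g : prevc g 0 = 0. Proof. by []. Qed.

Lemma coef_hh (g : {poly rat}) i :
  (hh * g)`_i.+1 = g`_i - prevc g i.
Proof.
rewrite /hh mulrBr mulr1 mulrBl -mulrA coefB !coefXM /=.
by case: i => [|i] //=; rewrite coefXM /= ?subr0.
Qed.

Fixpoint qq (n : nat) : {poly rat} :=
  if n is n'.+1 then (hh * qq n')^`() else -1.
Fixpoint uu (n : nat) : {poly rat} :=
  if n is n'.+1 then (hh * uu n')^`() - 'X * qq n' else -1.

Definition qc n i : rat := (-1) ^+ i.+1 * (i.+1)`!%:R * (stirling2 n.+1 i.+1)%:R.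
Definition uc n i : rat := (-1) ^+ i.+1 * (i.+1)`!%:R * harmonic i.+1 * (stirling2 n.+1 i.+1)%:R.

Lemma harmonicS i : harmonic i.+1 = harmonic i + (i.+1%:R)^-1.
Proof. by rewrite /harmonic big_nat_recr. Qed.

Lemma coef_qq n i : (qq n)`_i = qc n i.
Proof.
elim: n i => [|n IH] i.
  rewrite /= /qc coefN coef1; case: i => [|i] /=.
    by rewrite /= expr1 mulr1; idtac.
  by rewrite /= !(muln0, addn0) mulr0 oppr0.
rewrite /= coef_deriv coef_hh !IH /qc.
case: i => [|i].
  by rewrite prevc0 subr0 /= !mul1n addn0 mulr1n.
rewrite prevcS IH /qc.
rewrite (_ : stirling2 n.+2 i.+2 = (i.+2 * stirling2 n.+1 i.+2 + stirling2 n.+1 i.+1)%N) //.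
rewrite (factS i.+1).
move: (stirling2 n.+1 i.+2) (stirling2 n.+1 i.+1) ((i.+1)`!) => a b f.
rewrite !natrD !natrM -mulr_natr !exprS.
ring.
Qed.

Lemma coefXprev (p : {poly rat}) i : ('X * p)`_i = prevc p i.
Proof. by rewrite coefXM; case: i. Qed.

Lemma harmonic0 : harmonic 0 = 0.
Proof. by rewrite /harmonic big_geq. Qed.
Lemma harmonic1 : harmonic 1 = 1.
Proof. by rewrite harmonicS harmonic0 add0r invr1. Qed.

Lemma coef_uu n i : (uu n)`_i = uc n i.
Proof.
elim: n i => [|n IH] i.
  rewrite /= /uc coefN coef1; case: i => [|i] /=.
    by rewrite harmonic1 expr1 !mulr1.
  by rewrite /= !(muln0, addn0) mulr0 oppr0.
rewrite /= coefB coef_deriv coef_hh coefXprev !IH /uc.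
case: i => [|i].
  by rewrite !prevc0 !subr0 /= harmonic1 !mul1n addn0 mulr1n !mulr1.
rewrite !prevcS IH coef_qq /uc /qc.
rewrite (_ : stirling2 n.+2 i.+2 = (i.+2 * stirling2 n.+1 i.+2 + stirling2 n.+1 i.+1)%N) //.
rewrite (factS i.+1) (harmonicS i.+1).
move: (stirling2 n.+1 i.+2) (stirling2 n.+1 i.+1) ((i.+1)`!) (harmonic i.+1) => a b f H.
rewrite !natrD !natrM -mulr_natr !exprS.
have h2 : (i.+2%:R : rat) != 0 by rewrite pnatr_eq0.
field.
have E : (2 + i%:R : rat) = i.+2%:R by rewrite addrC -[i.+2]addn2 natrD.
by rewrite E.
Qed.

Lemma size_qq n : (size (qq n) <= n.+1)%N.
Proof.
apply/leq_sizeP => j Hj; rewrite coef_qq /qc stirling2_gt ?mulr0 //.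
Qed.
Lemma size_uu n : (size (uu n) <= n.+1)%N.
Proof.
apply/leq_sizeP => j Hj; rewrite coef_uu /uc stirling2_gt ?mulr0 //.
Qed.

Lemma sum_bound (f : {poly rat}) (F : nat -> rat) d :
  (size f <= d)%N -> (forall i, (size f <= i)%N -> F i = 0) ->
  \sum_(i < size f) F i = \sum_(i < d) F i.
Proof.
move=> Hd H0.
rewrite -(big_mkord xpredT) -(big_mkord xpredT F) (@big_cat_nat _ _ _ (size f) 0 d xpredT F (leq0n _) Hd) /=.
rewrite [X in _ = _ + X]big1_seq ?addr0 // => i /andP[_]; rewrite mem_index_iota => /andP[Hi _]; exact: H0.
Qed.

Lemma coef_out (p : {poly rat}) i : (size p <= i)%N -> p`_i = 0.
Proof. exact: nth_default. Qed.

Definition Iop (f : {poly rat}) := \sum_(i < size f) f`_i / (i.+1)%:R.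

Lemma Ibound (f : {poly rat}) d : (size f <= d)%N -> Iop f = \sum_(i < d) f`_i / (i.+1)%:R.
Proof.
move=> Hd; rewrite /Iop (@sum_bound f (fun i => f`_i / (i.+1)%:R) d Hd) //.
by move=> i Hi; rewrite coef_out // mul0r.
Qed.

Lemma IopD (f g : {poly rat}) : Iop (f + g) = Iop f + Iop g.
Proof.
set d := (size f + size g)%N.
have Hf : (size f <= d)%N by rewrite leq_addr.
have Hg : (size g <= d)%N by rewrite leq_addl.
have Hfg : (size (f + g)%R <= d)%N.
  apply/leq_sizeP => j Hj; rewrite coefD.
  by rewrite !coef_out ?addr0 // (leq_trans _ Hj).
rewrite (Ibound _ _ Hf) (Ibound _ _ Hg) (Ibound _ _ Hfg) -big_split /=.
by apply: eq_bigr => i _; rewrite coefD mulrDl.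
Qed.

Lemma IopZ (a : rat) (f : {poly rat}) : Iop (a *: f) = a * Iop f.
Proof.
have Hf : (size (a *: f)%R <= size f)%N.
  by apply/leq_sizeP => j Hj; rewrite coefZ coef_out // mulr0.
rewrite (Ibound _ _ Hf) /Iop mulr_sumr; apply: eq_bigr => i _.
by rewrite coefZ mulrA.
Qed.

Lemma IopN (f : {poly rat}) : Iop (- f) = - Iop f.
Proof. by rewrite -scaleN1r IopZ mulN1r. Qed.
Lemma IopB (f g : {poly rat}) : Iop (f - g) = Iop f - Iop g.
Proof. by rewrite IopD IopN. Qed.
Lemma Iop0 : Iop 0 = 0.
Proof. by rewrite /Iop size_poly0 big_ord0. Qed.
Lemma Iop_sum I (r : seq I) (P : pred I) (F : I -> {poly rat}) :
  Iop (\sum_(i <- r | P i) F i) = \sum_(i <- r | P i) Iop (F i).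
Proof. exact: (big_morph Iop IopD Iop0). Qed.

Lemma IopXn k : Iop ('X^k) = (k.+1%:R)^-1.
Proof.
rewrite /Iop size_polyXn big_ord_recr /= big1 ?add0r.
  by rewrite coefXn eqxx mul1r.
by move=> [i Hi] _; rewrite coefXn /= (ltn_eqF Hi) mul0r.
Qed.

Lemma Iop_deriv (F : {poly rat}) : Iop (F^`()) = F.[1] - F.[0].
Proof.
set d := size F.
have Hd : (size F^`() <= d)%N.
  by apply/leq_sizeP => j Hj; rewrite coef_deriv coef_out ?mul0rn // leqW.
rewrite (Ibound _ _ Hd) horner_coef horner_coef0.
rewrite (@sum_bound F (fun i => F`_i * 1 ^+ i) d.+1 (leqnSn d)); last first.
  by move=> i Hi; rewrite coef_out // mul0r.
rewrite big_ord_recl /= expr0 mulr1 addrC addKr.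
apply: eq_bigr => i _; rewrite coef_deriv expr1n mulr1 /bump leq0n add1n -[X in X / _]mulr_natr mulfK //.
by rewrite pnatr_eq0.
Qed.

Lemma Iparts (f g : {poly rat}) :
  Iop (f^`() * g) = (f * g).[1] - (f * g).[0] - Iop (f * g^`()).
Proof. by rewrite -Iop_deriv derivM IopD addrK. Qed.

Lemma hh1 : hh.[1] = 0.
Proof. by rewrite /hh !hornerE subrr. Qed.
Lemma hh0 : hh.[0] = 0.
Proof. by rewrite /hh !hornerE. Qed.

Lemma skew (f g : {poly rat}) :
  Iop (hh * (hh * f)^`() * g) = - Iop (hh * f * (hh * g)^`()).
Proof.
apply/eqP; rewrite -subr_eq0 opprK -IopD.
have -> : hh * (hh * f)^`() * g + hh * f * (hh * g)^`() =
   ((hh * f) * (hh * g))^`() by rewrite [RHS]derivM; ring.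
by rewrite Iop_deriv !hornerE oppr0.
Qed.

Definition sig (p : {poly rat}) := p \Po (1 - 'X).

Lemma sigM p q : sig (p * q) = sig p * sig q.
Proof. exact: comp_polyM. Qed.
Lemma sigD p q : sig (p + q) = sig p + sig q.
Proof. exact: comp_polyD. Qed.
Lemma sigB p q : sig (p - q) = sig p - sig q.
Proof. exact: comp_polyB. Qed.
Lemma sigZ (a : rat) p : sig (a *: p) = a *: sig p.
Proof. exact: linearZ. Qed.
Lemma sigX : sig 'X = 1 - 'X.
Proof. exact: comp_polyX. Qed.
Lemma sig1 : sig 1 = 1.
Proof. by rewrite /sig -polyC1 comp_polyC. Qed.
Lemma sighh : sig hh = hh.
Proof. by rewrite /hh sigM sigB sig1 sigX; ring. Qed.
Lemma sig_deriv p : sig (p^`()) = - (sig p)^`().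
Proof.
rewrite /sig deriv_comp derivB derivX -polyC1 derivC sub0r mulrN1 opprK //.
Qed.

Definition prim (p : {poly rat}) :=
  \poly_(i < (size p).+1) (if i is j.+1 then p`_j / (j.+1)%:R else 0).

Lemma prim_deriv p : (prim p)^`() = p.
Proof.
apply/polyP => i; rewrite coef_deriv coef_poly ltnS.
case: ltnP => Hi.
  by rewrite -(mulr_natr (p`_i / _)) mulfVK // pnatr_eq0.
by rewrite coef_out // mul0rn.
Qed.

Lemma horner_sig p x : (sig p).[x] = p.[1 - x].
Proof. by rewrite /sig horner_comp !hornerE. Qed.

Lemma Iop_sig p : Iop (sig p) = Iop p.
Proof.
rewrite -{1 2}(prim_deriv p) sig_deriv IopN !Iop_deriv !horner_sig subr0 subrr.
by rewrite opprB.
Qed.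

Lemma sig_qq n : sig (qq n) = (-1) ^+ n *: qq n.
Proof.
elim: n => [|n IH] /=.
  by rewrite expr0 scale1r -scaleN1r sigZ sig1.
by rewrite sig_deriv sigM sighh IH -scalerAr derivZ exprS mulN1r scaleNr.
Qed.

Definition PP k : {poly rat} := if k is k'.+1 then 'X * qq k' else 1.
Definition Dop (p : {poly rat}) := 'X * ((1 - 'X) * p)^`().

Lemma DopD p q : Dop (p + q) = Dop p + Dop q.
Proof. by rewrite /Dop mulrDr derivD mulrDr. Qed.
Lemma DopZ (a : rat) p : Dop (a *: p) = a *: Dop p.
Proof. by rewrite /Dop -scalerAr derivZ scalerAr. Qed.
Lemma Dop0 : Dop 0 = 0.
Proof. by rewrite /Dop mulr0 -polyC0 derivC mulr0. Qed.
Lemma Dop_sum I (r : seq I) (P : pred I) (F : I -> {poly rat}) :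
  Dop (\sum_(i <- r | P i) F i) = \sum_(i <- r | P i) Dop (F i).
Proof. exact: (big_morph Dop DopD Dop0). Qed.

Lemma deriv1p : (1 : {poly rat})^`() = 0.
Proof. by rewrite -polyC1 derivC. Qed.

Lemma deriv1X : (1 - 'X : {poly rat})^`() = -1.
Proof. by rewrite derivB derivX -polyC1 derivC sub0r. Qed.

Lemma Dop_PP k : Dop (PP k) = PP k.+1.
Proof.
case: k => [|k] /=; rewrite /Dop.
  by rewrite mulr1 deriv1X.
by rewrite (_ : (1 - 'X) * ('X * qq k) = hh * qq k) // /hh; ring.
Qed.

Definition QQ M := \sum_(k < M.+1) ('C(M, k))%:R *: PP k.

Lemma QQS M : QQ M.+1 = QQ M + Dop (QQ M).
Proof.
rewrite /QQ Dop_sum big_ord_recl /=.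
under eq_bigr => i _ do rewrite binS natrD scalerDl.
rewrite big_split /= addrA; congr (_ + _).
  rewrite [in LHS]big_ord_recr /= (@bin_small M M.+1) // scale0r addr0.
  rewrite [in RHS]big_ord_recl /= !bin0; congr (_ + _).
by apply: eq_bigr => i _; rewrite DopZ Dop_PP.
Qed.

Lemma QQ0 : QQ 0 = 1.
Proof. by rewrite /QQ big_ord1 /= scale1r. Qed.

Lemma QQ_qq c : QQ c.+1 = - ((1 - 'X) * qq c).
Proof.
elim: c => [|c IH].
  by rewrite QQS QQ0 /Dop mulr1 deriv1X /=; ring.
rewrite QQS IH /Dop /=.
rewrite !(derivM, derivN, derivB, derivX, deriv1X) /hh deriv1p.
ring.
Qed.

Lemma Iop_qqS c : Iop (qq c.+1) = 0.
Proof. by rewrite /= Iop_deriv !hornerE oppr0 //. Qed.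

Lemma bern_rec c :
  \sum_(k < c.+2) ('C(c.+2, k))%:R * Iop (PP k) = 0.
Proof.
have := congr1 Iop (QQ_qq c.+1).
rewrite /QQ Iop_sum big_ord_recr /= binn scale1r.
under eq_bigr => i _ do rewrite IopZ.
move=> H; rewrite -[LHS](addrK (Iop ('X * (hh * qq c)^`()))) H.
rewrite (_ : - ((1 - 'X) * (hh * qq c)^`()) = 'X * (hh * qq c)^`() - (hh * qq c)^`()); last by ring.
by rewrite IopB Iop_deriv !hornerE subrr.
Qed.

Lemma size_bern n : size (bern_seq n) = n.+1.
Proof. by elim: n => [|n IH] //=; rewrite size_rcons IH. Qed.

Lemma bern_prefix n k : (k <= n)%N -> (bern_seq n)`_k = bernoulli k.
Proof.
elim: n => [|n IH] Hk.
  by move: Hk; rewrite leqn0 => /eqP ->.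
rewrite leq_eqVlt in Hk; case/orP: Hk => [/eqP -> //|Hk].
by rewrite /= nth_rcons size_bern Hk IH.
Qed.

Lemma bernS n : bernoulli n.+1 =
  - (\sum_(k < n.+1) ('C(n.+2, k))%:R * bernoulli k) / (n.+2)%:R.
Proof.
rewrite /bernoulli /= nth_rcons size_bern ltnn eqxx.
congr (- _ / _); apply: eq_bigr => k _; rewrite -/(bernoulli k) bern_prefix //.
by rewrite -ltnS.
Qed.

Lemma Iop_PP n : Iop (PP n) = bernoulli n.
Proof.
elim/ltn_ind: n => -[|n] IH.
  by rewrite /= -(expr0 'X) IopXn invr1.
have := bern_rec n; rewrite big_ord_recr /= binSn.
move=> H; rewrite bernS.
have Hn : ((n.+2)%:R : rat) != 0 by rewrite pnatr_eq0.
rewrite (_ : \sum_(k < n.+1) 'C(n.+2, k)%:R * bernoulli k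
   = \sum_(i < n.+1) 'C(n.+2, i)%:R * Iop (PP i)); last first.
  by apply: eq_bigr => i _; rewrite IH.
rewrite (_ : \sum_(i < n.+1) 'C(n.+2, i)%:R * Iop (PP i) = - (n.+2%:R * Iop ('X * qq n))).
  by rewrite opprK mulrAC mulfV // mul1r.
by apply/eqP; rewrite -addr_eq0 H.
Qed.

Definition AA a b := Iop (hh * qq a * qq b).

Lemma AA_skew a b : AA a b.+1 = - AA a.+1 b.
Proof. by rewrite /AA /= skew opprK. Qed.

Lemma AA_sym a b : AA a b = AA b a.
Proof. by rewrite /AA mulrAC. Qed.

Lemma AA_shift a b : AA a b = (-1) ^+ b * AA (a + b) 0.
Proof.
elim: b a => [|b IH] a; first by rewrite expr0 mul1r addn0.
by rewrite AA_skew IH addSnnS exprS mulN1r mulNr.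
Qed.

Lemma AA_c0 c : AA c 0 = bernoulli c.+2.
Proof.
rewrite -Iop_PP /AA /= mulrN1 IopN.
rewrite (_ : 'X * (hh * qq c)^`() = (hh * qq c)^`() * 'X); last by rewrite mulrC.
by rewrite Iparts derivX mulr1 !hornerE.
Qed.

Lemma sign_even a b : ~~ odd (a + b) -> (-1) ^+ b = (-1) ^+ a :> rat.
Proof.
rewrite oddD => H; rewrite -signr_odd -[in RHS]signr_odd.
by case: (odd a) (odd b) H => -[].
Qed.

Lemma AA_odd a b : odd (a + b) -> AA a b = 0.
Proof.
move=> H.
have H1 := AA_shift a b; have H2 := AA_shift b a.
rewrite AA_sym addnC in H2.
have : (-1) ^+ a = - (-1) ^+ b :> rat.
  rewrite -signr_odd -[in RHS]signr_odd; move: H; rewrite oddD.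
  by case: (odd a) (odd b) => -[] //= _; rewrite ?opprK ?expr0 ?expr1.
move=> E; rewrite E mulNr -H1 in H2.
have : AA a b *+ 2 = 0.
  by rewrite mulr2n [X in X + _]H2 addNr.
by move/eqP; rewrite mulrn_eq0 /= => /eqP.
Qed.

Lemma AA_even a b : ~~ odd (a + b) -> AA a b = (-1) ^+ a * bernoulli (a + b).+2.
Proof. by move=> H; rewrite AA_shift AA_c0 (sign_even _ _ H). Qed.

Definition Kq a b := Iop ('X * hh * qq a * qq b).

Lemma Kq_half a b : ~~ odd (a + b) -> AA a b = Kq a b + Kq a b.
Proof.
move=> H.
set g := qq a * qq b.
have Hg : sig g = g.
  rewrite /g sigM !sig_qq -scalerAl -scalerAr scalerA -exprD.
  by rewrite -signr_odd (negbTE H) expr0 scale1r.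
set w := hh * (1 - 'X - 'X) * g.
have Hw : sig w = - w.
  rewrite /w sigM Hg sigM sighh !sigB sig1 sigX /hh; ring.
have Iw : Iop w = 0.
  have : Iop w = - Iop w by rewrite -IopN -Hw Iop_sig.
  move/eqP; rewrite -subr_eq0 opprK -mulr2n mulrn_eq0 /= => /eqP //.
rewrite /AA /Kq -IopD.
have -> : hh * qq a * qq b = w + ('X * hh * qq a * qq b + 'X * hh * qq a * qq b).
  by rewrite /w /g; ring.
by rewrite [LHS]IopD Iw add0r.
Qed.

Definition EE a b := Iop (hh * uu a * qq b).

Lemma EE_rec a b : EE a.+1 b = - EE a b.+1 - Kq a b.
Proof.
rewrite /EE /Kq.
have -> : hh * uu a.+1 * qq b = hh * (hh * uu a)^`() * qq b - 'X * hh * qq a * qq b.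
  by rewrite /=; ring.
by rewrite IopB skew.
Qed.

Lemma EE_main a b : odd (a + b) ->
  EE a b = (-1) ^+ a * (a%:R / 2) * bernoulli (a + b).+1.
Proof.
elim: a b => [|a IH] b H.
  by rewrite mulr0n mul0r; exact: (AA_odd 0 b H).
have Hab : ~~ odd (a + b) by move: H; rewrite addSn /=; case: (odd (a + b)).
rewrite EE_rec IH; last by rewrite addnS.
have HK := Kq_half _ _ Hab; rewrite AA_even // in HK.
have -> : Kq a b = (-1) ^+ a * bernoulli (a + b).+2 / 2.
  by rewrite HK -mulr2n -(mulr_natr (Kq a b)) mulfK.
rewrite addnS addSn -natr1 exprS.
by field.
Qed.

Lemma part1_val N : - Iop (uu N) = bernoulli N.
Proof.
case: N => [|c] /=.
  by rewrite IopN opprK -(expr0 'X) IopXn invr1.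
by rewrite IopB Iop_deriv !hornerE opprK -Iop_PP.
Qed.

Lemma part1_sum N :
  \sum_(1 <= k < N.+2)
     (-1) ^+ (k - 1) * (stirling2 N.+1 k)%:R * ((k - 1)`!)%:R * harmonic k
  = - Iop (uu N).
Proof.
rewrite big_add1 /= big_mkord (Ibound _ _ (size_uu N)) -sumrN.
apply: eq_bigr => i _; rewrite coef_uu /uc subn1 /= factS natrM.
have Hn : ((i.+1)%:R : rat) != 0 by rewrite pnatr_eq0.
rewrite exprS; field; by rewrite -natr1 addrC in Hn.
Qed.

Lemma poly_expand (p : {poly rat}) d :
  (size p <= d)%N -> p = \sum_(i < d) p`_i *: 'X^i.
Proof.
move=> Hd; rewrite -poly_def; apply/polyP => j; rewrite coef_poly.
by case: ltnP => // Hj; rewrite coef_out // (leq_trans Hd Hj).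
Qed.

Lemma Iop_hhX s : Iop (hh * 'X^s) = ((s.+2 * s.+3)%N%:R)^-1.
Proof.
have -> : hh * 'X^s = 'X^(s.+1) - 'X^(s.+2) by rewrite /hh !exprS; ring.
rewrite IopB !IopXn natrM.
have H2 : ((s.+2)%:R : rat) != 0 by rewrite pnatr_eq0.
have H3 : ((s.+3)%:R : rat) != 0 by rewrite pnatr_eq0.
rewrite -addn2 natrD addrC in H2; rewrite -addn3 natrD addrC in H3.
by field; rewrite H2 H3.
Qed.

Lemma EE_sum a b : EE a b = \sum_(i < a.+1) \sum_(l < b.+1)
   (uu a)`_i * (qq b)`_l * (((i + l).+2 * (i + l).+3)%N%:R)^-1.
Proof.
rewrite /EE {1}(poly_expand _ _ (size_uu a)) {1}(poly_expand _ _ (size_qq b)).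
rewrite [hh * _]mulr_sumr mulr_suml Iop_sum; apply: eq_bigr => i _.
rewrite mulr_sumr Iop_sum; apply: eq_bigr => l _.
rewrite -scalerAr IopZ -scalerAr -scalerAl IopZ -[hh * _ * _]mulrA -exprD Iop_hhX.
by rewrite mulrCA mulrA.
Qed.

Theorem corollary1 :
  (forall n : nat, (1 <= n)%N ->
     \sum_(1 <= k < n.+1)
        (-1) ^+ (k - 1) * (stirling2 n k)%:R * ((k - 1)`!)%:R * harmonic k
     = bernoulli (n - 1))
  /\
  (forall n m : nat, (1 < n)%N -> (1 <= m)%N -> odd (n + m) ->
     (-1) ^+ (n - 1) * ((n - 1)%:R / 2) * bernoulli (n + m - 1)
     = \sum_(1 <= j < n.+1) \sum_(1 <= k < m.+1)
          (-1) ^+ (k + j) * (stirling2 n j)%:R * (stirling2 m k)%:R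
          * ((j`! * k`!)%:R * harmonic j) / (((k + j) * (k + j + 1))%N)%:R).
Proof.
split.
  case=> [|N] // _.
  by rewrite part1_sum part1_val subn1.
case=> [|a] // [|b] // _ _ Hodd.
have Hab : odd (a + b) by move: Hodd; rewrite addSn addnS /= negbK.
rewrite subSS subn0 addSn subSS subn0 addnS -EE_main // EE_sum.
rewrite big_add1 /= big_mkord; apply: eq_bigr => i _.
rewrite big_add1 /= big_mkord; apply: eq_bigr => l _.
rewrite (_ : ((l.+1 + i.+1) * (l.+1 + i.+1 + 1))%N = ((i + l).+2 * (i + l).+3)%N); last first.
  by rewrite addn1 addSn addnS addnC.
rewrite coef_uu coef_qq /uc /qc natrM exprD.
rewrite (_ : (i.+1 * stirling2 a i.+1 + stirling2 a i)%N = stirling2 a.+1 i.+1) //.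
rewrite (_ : (l.+1 * stirling2 b l.+1 + stirling2 b l)%N = stirling2 b.+1 l.+1) //.
rewrite natrM; ring.
Qed.
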